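(* Let $G$ be a finite simple $(P_2\cup P_1)$-free graph. Then: (1) if $S\subseteq V(G)$ is a cutset of $G$, then every component of $G-S$ consists of a single vertex; (2) if $S$ is a minimal cutset of $G$ (no proper subset of $S$ is a cutset), then every vertex of $S$ is adjacent to every vertex of $V(G)\setminus S$, i.e., the bipartite graph $G[S,V(G)\setminus S]$ is complete bipartite; (3) $\kappa(G)=\delta(G)$; (4) $\delta(G)\ge |V(G)|-\alpha(G)$.
   Context: $P_2\cup P_1$ is the graph on three vertices consisting of one edge and one isolated vertex; $G$ is $(P_2\cup P_1)$-free if it has no induced subgraph isomorphic to $P_2\cup P_1$. A cutset of $G$ is a set $S\subseteq V(G)$ such that $G-S$ has at least two components. $G[S,V(G)\setminus S]$ denotes the bipartite graph with parts $S$ and $V(G)\setminus S$ whose edges are the edges of $G$ between these parts. $\delta(G)$ is the minimum degree, $\alpha(G)$ the independence number, and $\kappa(G)$ the connectivity: the minimum size of a cutset if $G$ is noncomplete, and $|V(G)|-1$ if $G$ is complete. *)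

(* Defs.v *)
From mathcomp Require Import all_boot all_order.
Set Implicit Arguments. Unset Strict Implicit. Unset Printing Implicit Defensive.

Section Graphs.
Variable T : finType.
Variable e : rel T.

Definition simple_graph : Prop := symmetric e /\ irreflexive e.

(* (P2 u P1)-free: no three distinct vertices x,y,z inducing one edge xy
   and an isolated vertex z. *)
Definition P2P1_free : Prop :=
  forall x y z : T, x != z -> y != z -> e x y -> ~~ e x z -> ~~ e y z -> False.

Definition del_rel (S : {set T}) : rel T :=
  [rel x y | [&& e x y, x \notin S & y \notin S]].

Definition same_comp (S : {set T}) (x y : T) : bool :=
  connect (del_rel S) x y.

Definition cutset (S : {set T}) : bool :=
  [exists x, exists y, [&& x \notin S, y \notin S & ~~ same_comp S x y]].

Definition minimal_cutset (S : {set T}) : bool :=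
  cutset S && [forall S' : {set T}, (S' \proper S) ==> ~~ cutset S'].

Definition complete_graph : bool :=
  [forall x, forall y, (x != y) ==> e x y].

Definition kappa : nat :=
  if complete_graph then #|T| - 1
  else \big[minn/#|T|]_(S : {set T} | cutset S) #|S|.

Definition degree (x : T) : nat := #|[set y | e x y]|.

(* minimum degree (the default #|T| is only reached when T is empty) *)
Definition delta : nat := \big[minn/#|T|]_(x : T) degree x.

Definition independent (A : {set T}) : bool :=
  [forall x in A, forall y in A, ~~ e x y].

Definition alpha : nat := \max_(A : {set T} | independent A) #|A|.

End Graphs.

(* Main.v *)
Require Import Defs.
From mathcomp Require Import all_boot all_order zify.

Set Implicit Arguments. Unset Strict Implicit. Unset Printing Implicit Defensive.

Lemma bm_le (I : eqType) (r : seq I) (P : pred I) (F : I -> nat) n j :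
  j \in r -> P j -> \big[minn/n]_(i <- r | P i) F i <= F j.
Proof.
elim: r => // a r IH; rewrite inE big_cons => /orP [/eqP<-|jr] Pj.
  by rewrite Pj geq_minl.
case: (P a); last exact: IH.
exact: leq_trans (geq_minr _ _) (IH jr Pj).
Qed.

Lemma bm_ge (I : finType) (P : pred I) (F : I -> nat) n d :
  d <= n -> (forall i, P i -> d <= F i) -> d <= \big[minn/n]_(i | P i) F i.
Proof.
move=> hn hF; apply: (big_ind (fun m => d <= m)) => //.
by move=> x y hx hy; rewrite leq_min hx hy.
Qed.

Lemma bm_idx (I : finType) (P : pred I) (F : I -> nat) n :
  \big[minn/n]_(i | P i) F i <= n.
Proof.
apply: (big_rec (fun m => m <= n)) => // i x _ hx.
exact: leq_trans (geq_minr _ _) hx.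
Qed.

Lemma bm_ex (I : finType) (P : pred I) (F : I -> nat) n (K : nat -> Prop) :
  K n -> (forall i, P i -> K (F i)) -> K (\big[minn/n]_(i | P i) F i).
Proof.
move=> hn hF; apply: (big_ind K) => // x y hx hy.
case: (leqP x y) => h; [have E := minn_idPl h | have E := minn_idPr (ltnW h)];
  by [].
Qed.

Section G.
Variable T : finType.
Variable e : rel T.
Hypothesis sg : simple_graph e.
Hypothesis fr : P2P1_free e.

Lemma del_sym S : symmetric (del_rel e S).
Proof.
case: sg => hs _ x y; rewrite /del_rel /= hs.
by case: (x \in S); case: (y \in S); rewrite ?andbF ?andbT.
Qed.

Lemma first_step S x y : same_comp e S x y -> x != y ->
  exists w, [&& e x w, x \notin S & w \notin S].
Proof.
move=> /connectP [[|w p] /= hp ->]; first by rewrite eqxx.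
by case/andP: hp => h _ _; exists w.
Qed.

Lemma key S : cutset e S -> forall u w, u \notin S -> w \notin S -> ~~ e u w.
Proof.
case: sg => hs hi.
move=> /existsP [a /existsP [b /and3P [aS bS nab]]] u w uS wS.
apply/negP => huw.
have cs := sym_connect_sym (del_sym S).
have cuw : same_comp e S u w by apply: connect1; rewrite /del_rel /= huw uS wS.
have [z [zS nuz]] : exists z, z \notin S /\ ~~ same_comp e S u z.
  case hua: (same_comp e S u a); last by exists a; rewrite hua.
  case hub: (same_comp e S u b); last by exists b; rewrite hub.
  by exfalso; move/negP: nab; apply; apply: connect_trans hub; rewrite /same_comp cs.
apply: (fr (x:=u) (y:=w) (z:=z)) => //.
- by apply: contraNneq nuz => <-; exact: connect0.
- by apply: contraNneq nuz => <-.
- by apply: contraNN nuz => h; apply: connect1; rewrite /del_rel /= h uS zS.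
- apply: contraNN nuz => h; apply: connect_trans cuw _.
  by apply: connect1; rewrite /del_rel /= h wS zS.
Qed.

Lemma part1 S : cutset e S ->
     forall x y, x \notin S -> y \notin S -> same_comp e S x y -> x = y.
Proof.
move=> cS x y xS yS hc; apply/eqP; apply/negPn/negP => nxy.
have [w /and3P [hxw _ wS]] := first_step hc nxy.
by move/negP: (key cS xS wS).
Qed.

Lemma part2 S : minimal_cutset e S ->
     forall x y, x \in S -> y \notin S -> e x y.
Proof.
case: sg => hs hi.
case/andP=> cS /forallP mS x y xS yS; apply/negPn/negP => nxy.
have := mS (S :\ x); rewrite properD1 //= => /negP ncS.
have cS' := cS; case/existsP: cS' => a /existsP [b /and3P [aS bS nab]].
have [c [cS1 ncy]] : exists c, c \notin S /\ y != c.
  case: (eqVneq y a) => [ya|]; last by exists a.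
  exists b; split => //; apply: contraNneq nab => <-; rewrite -ya; exact: connect0.
have hc : same_comp e (S :\ x) y c.
  apply/negPn/negP => h; apply: ncS; apply/existsP; exists y; apply/existsP; exists c.
  by rewrite !in_setD1 (negbTE yS) (negbTE cS1) !andbF h.
have [w /and3P [hyw _ wS]] := first_step hc ncy.
case: (eqVneq w x) => [wx|wx].
  by move/negP: nxy; apply; rewrite hs -wx.
move: wS; rewrite in_setD1 wx /= => wS.
by move/negP: (key cS yS wS).
Qed.

Lemma nbr_sub S a : cutset e S -> a \notin S -> [set y | e a y] \subset S.
Proof.
move=> cS aS; apply/subsetP => y; rewrite inE => hy.
apply/negPn/negP => yS; by move/negP: (key cS aS yS).
Qed.

Lemma deg_ex : #|T| > 0 -> exists x, degree e x <= delta e.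
Proof.
move=> h; rewrite /delta; apply: (bm_ex (K := fun m => exists x, degree e x <= m)) => [|i _]; last by exists i.
case/card_gt0P: h => x _; exists x; exact: max_card.
Qed.

Lemma part3 : kappa e = delta e.
Proof.
case: sg => hs hi.
rewrite /kappa; case: ifP => hc.
  have degx x : degree e x = #|T| - 1.
    rewrite /degree; have -> : [set y | e x y] = [set: T] :\ x.
      apply/setP => y; rewrite !inE; case: (eqVneq y x) => [->|yx]; first by rewrite hi.
      by move/forallP: hc => /(_ x) /forallP /(_ y); rewrite eq_sym yx.
    by have := cardsD1 x [set: T]; rewrite cardsT inE; lia.
  apply/eqP; rewrite eqn_leq; apply/andP; split.
    by apply: bm_ge => [|i _]; rewrite ?leq_subr ?degx.
  case: (posnP #|T|) => [h0|hT]; first by rewrite /delta; apply: leq_trans (bm_idx _ _ _) _; rewrite h0.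
  case/card_gt0P: hT => x _; rewrite -(degx x); exact: bm_le (mem_index_enum x) _.
have [u [v [uv nuv]]] : exists u v, u != v /\ ~~ e u v.
  move/negbT: hc => /forallPn [u /forallPn [v]]; rewrite negb_imply => /andP [h1 h2].
  by exists u, v.
have hT : #|T| > 0 by apply/card_gt0P; exists u.
have [x hx] := deg_ex hT.
apply/eqP; rewrite eqn_leq; apply/andP; split; last first.
  apply: bm_ge => [|S cS]; first by rewrite /delta bm_idx.
  case/existsP: (cS) => a /existsP [b /and3P [aS _ _]].
  apply: leq_trans _ (subset_leq_card (nbr_sub cS aS)).
  by rewrite /delta; apply: bm_le => //; rewrite mem_index_enum.
have hdu : delta e <= #|T| - 2.
  have d1 : delta e <= degree e u.
    by rewrite /delta; apply: bm_le => //; rewrite mem_index_enum.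
  apply: leq_trans d1 _.
  have hsub : [set y | e u y] \subset [set: T] :\ u :\ v.
    apply/subsetP => y; rewrite !inE => hy; apply/andP; split.
      by apply: contraNneq nuv => <-.
    by rewrite andbT; apply: contraTneq hy => ->; rewrite hi.
  have := subset_leq_card hsub.
  have c1 := cardsD1 u [set: T]; have c2 := cardsD1 v ([set: T] :\ u).
  rewrite cardsT !inE eq_sym uv /= in c1 c2; rewrite /degree; move: c1 c2 => /= c1 c2; lia.
have [z hz] : exists z, z \notin x |: [set y | e x y].
  apply/existsP; rewrite -negb_forall; apply/negP => /forallP hall.
  have : [set: T] \subset x |: [set y | e x y] by apply/subsetP => y _; exact: hall.
  move/subset_leq_card; rewrite cardsU1 => h.
  have h1 : 1 < #|T|.
    by rewrite (cardD1 u) inE ltnS; apply/card_gt0P; exists v; rewrite !inE eq_sym uv.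
  move: hx hdu h; rewrite /degree; case: (x \in _) => /= => a b c; rewrite -cardsT in b h1; lia.
have cS : cutset e [set y | e x y].
  apply/existsP; exists x; apply/existsP; exists z.
  move: hz; rewrite !inE negb_or => /andP [zx nxz].
  rewrite hi nxz /=; apply/negP => hc2.
  have [w /and3P [h1 _ h2]] := first_step hc2 (negbT (contraNF (fun h => introT eqP (esym (eqP h))) zx)).
  by move: h2; rewrite inE h1.
apply: leq_trans _ hx; rewrite /degree.
have := @bm_le _ (index_enum {set T}) (fun S => cutset e S) (fun S : {set T} => #|S|) #|T| _ (mem_index_enum _) cS.
exact.
Qed.

Lemma part4 : #|T| - alpha e <= delta e.
Proof.
case: sg => hs hi.
case: (posnP #|T|) => [->|hT]; first by rewrite sub0n.
have [x hx] := deg_ex hT.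
set A := [set y | ~~ e x y].
have indA : independent e A.
  apply/forallP => y; apply/implyP; rewrite inE => hy.
  apply/forallP => z; apply/implyP; rewrite inE => hz.
  apply/negP => hyz.
  case: (eqVneq y x) => [yx|yx]; first by move: hz; rewrite -yx hyz.
  case: (eqVneq z x) => [zx|zx]; first by move: hy; rewrite -zx hs hyz.
  by apply: (fr yx zx hyz); rewrite hs.
have hal : #|A| <= alpha e by rewrite /alpha; exact: (leq_bigmax_cond A indA).
have : #|A| + degree e x = #|T|.
  rewrite /degree /A -(cardsC [set y | e x y]) addnC; congr (_ + _).
  by apply: eq_card => y; rewrite !inE.
lia.
Qed.

End G.

Theorem lemma2p6 (T : finType) (e : rel T) :
  simple_graph e -> P2P1_free e ->
  (forall S : {set T}, cutset e S ->
     forall x y, x \notin S -> y \notin S -> same_comp e S x y -> x = y) /\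
  (forall S : {set T}, minimal_cutset e S ->
     forall x y, x \in S -> y \notin S -> e x y) /\
  kappa e = delta e /\
  #|T| - alpha e <= delta e.
Proof.
move=> sg fr; split; first exact: part1.
split; first exact: part2.
split; [exact: part3 | exact: part4].
Qed.
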